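(* Assume $S\times M\neq\emptyset$, let $(x,\lambda):[t_0,+\infty[\ \to X\times Y$ be a solution of (AHT), and suppose there exists $t_+\ge t_0$ such that $\varepsilon^2(t)+\dot\varepsilon(t)\ge0$ and $2\varepsilon(t)\dot\varepsilon(t)+\ddot\varepsilon(t)\le0$ for all $t\ge t_+$. Then for every $(\bar x,\bar\lambda)\in S\times M$, as $t\to+\infty$: \[ \|(\dot x(t),\dot\lambda(t))+\varepsilon(t)((x(t),\lambda(t))-(\bar x,\bar\lambda))\|^2=\mathcal{O}\big(e^{-2\rho(t)}+\varepsilon^2(t)\big), \] \[ \varepsilon(t)\big(L(x(t),\bar\lambda)-L(\bar x,\lambda(t))\big)=\mathcal{O}\big(e^{-2\rho(t)}+\varepsilon^2(t)\big),\qquad \|T(x(t),\lambda(t))-T(\bar x,\bar\lambda)\|^2=\mathcal{O}\big(e^{-2\rho(t)}+\varepsilon^2(t)\big). \]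
   Context: $X,Y$ are real Hilbert spaces; $X\times Y$ carries the product inner product and norm $\|\cdot\|$. Standing assumptions: $f:X\to\mathbb{R}$ is convex and continuously differentiable with $\nabla f$ Lipschitz continuous on bounded subsets of $X$; $A:X\to Y$ is linear and continuous with adjoint $A^*$; $b\in Y$; $\varepsilon:[t_0,+\infty[\ \to\ ]0,+\infty[$ ($t_0\ge0$) is twice continuously differentiable with $\lim_{t\to+\infty}\varepsilon(t)=0$. $L(x,\lambda)=f(x)+\langle\lambda,Ax-b\rangle_Y$ and $T(x,\lambda)=(\nabla f(x)+A^*\lambda,\ b-Ax)$. $S$ is the set of optimal solutions of $\min\{f(x):Ax=b\}$, $M$ the set of Lagrange multipliers; $S\times M$ is the set of saddle points of $L$, equal to the zero set of $T$. $\rho(t)=\int_{t_0}^t\varepsilon(\tau)\,d\tau$. (AHT) is the system $\dot x+\nabla f(x)+A^*\lambda+\varepsilon(t)x=0$, $\dot\lambda+b-Ax+\varepsilon(t)\lambda=0$; a solution is a continuously differentiable $(x,\lambda):[t_0,+\infty[\ \to X\times Y$ satisfying it on $[t_0,+\infty[$ (existence and uniqueness for every initial datum is assumed). *)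

(* Defs.v *)
From HB Require Import structures.
From mathcomp Require Import all_boot all_order all_algebra.
From mathcomp Require Import all_classical all_reals all_analysis.
Set Implicit Arguments. Unset Strict Implicit. Unset Printing Implicit Defensive.
Import Order.TTheory GRing.Theory Num.Theory.
Import numFieldNormedType.Exports.
Local Open Scope classical_set_scope.
Local Open Scope ring_scope.

(* A real inner product on a normed space whose norm it induces.
   Together with completeness of the carrier this makes it a real Hilbert space. *)
Definition is_inner_product (R : realType) (X : normedModType R)
  (ip : X -> X -> R) : Prop :=
  [/\ (forall x y, ip x y = ip y x),
      (forall a x y z, ip (a *: x + y) z = a * ip x z + ip y z) &
      (forall x, ip x x = `|x| ^+ 2)].

Definition has_deriv_on (R : realType) (V : normedModType R) (t0 : R)
  (g dg : R -> V) : Prop :=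
  forall t, t0 <= t ->
    (fun s => (s - t)^-1 *: (g s - g t)) @ within (fun s => t0 <= s /\ s != t) (nbhs t)
      --> dg t.

Definition cont_on (R : realType) (V : normedModType R) (t0 : R) (g : R -> V) : Prop :=
  {within `[t0, +oo[, continuous g}.

Definition convex_fun (R : realType) (X : normedModType R) (f : X -> R) : Prop :=
  forall (x y : X) (a : R), 0 <= a <= 1 ->
    f (a *: x + (1 - a) *: y) <= a * f x + (1 - a) * f y.

Definition optsol (R : realType) (X Y : normedModType R) (f : X -> R)
  (A : X -> Y) (b : Y) : set X :=
  [set xb | A xb = b /\ forall x, A x = b -> f xb <= f x].

Definition multipliers (R : realType) (X Y : normedModType R) (f : X -> R)
  (gf : X -> X) (A : X -> Y) (As : Y -> X) (b : Y) : set Y :=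
  [set lb | exists2 xb, optsol f A b xb & gf xb + As lb = 0].

Definition lagr (R : realType) (X Y : normedModType R) (ipY : Y -> Y -> R)
  (f : X -> R) (A : X -> Y) (b : Y) (x : X) (l : Y) : R :=
  f x + ipY l (A x - b).

Definition pnorm2 (R : realType) (X Y : normedModType R) (u : X) (v : Y) : R :=
  `|u| ^+ 2 + `|v| ^+ 2.

Definition Top (R : realType) (X Y : normedModType R)
  (gf : X -> X) (A : X -> Y) (As : Y -> X) (b : Y) (x : X) (l : Y) : X * Y :=
  (gf x + As l, b - A x).

Definition bigO_pinfty (R : realType) (F G : R -> R) : Prop :=
  exists C : R, \forall t \near +oo, `|F t| <= C * `|G t|.

(* Main.v *)
Require Import Defs.
From HB Require Import structures.
From mathcomp Require Import all_boot all_order all_algebra.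
From mathcomp Require Import all_classical all_reals all_analysis.
From mathcomp Require Import ring lra.
Set Implicit Arguments. Unset Strict Implicit. Unset Printing Implicit Defensive.
Import Order.TTheory GRing.Theory Num.Theory.
Import numFieldNormedType.Exports.
Local Open Scope classical_set_scope.
Local Open Scope ring_scope.
Section Dini.
Variable R : realType.

Lemma right_ex (Q : R -> Prop) c : (\forall s \near c^'+, Q s) ->
  exists2 e, 0 < e & forall s, c < s < c + e -> Q s.
Proof.
rewrite /at_right /within /= => /nbhs_ballP[e /= e0 He].
exists e => // s /andP[cs se]; apply: He => //.
rewrite /ball /= ltr_distlC; apply/andP; split; lra.
Qed.

Lemma dini (g : R -> R) a b : a <= b ->
  (forall s, a < s <= b -> {for s, continuous g}) ->
  (forall s, a <= s < b -> forall d, 0 < d ->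
     \forall s' \near s^'+, g s' <= g s + d * (s' - s)) ->
  g b <= g a.
Proof.
move=> ab gc gd.
suff H : forall d, 0 < d -> g b <= g a + d * (b - a).
  have [->|ab'] := eqVneq a b; first by [].
  have ba0 : 0 < b - a by rewrite subr_gt0 lt_neqAle ab' ab.
  apply/ler_addgt0Pr => e e0.
  have := H (e / (b - a)) (divr_gt0 e0 ba0).
  by rewrite divfK// gt_eqF.
move=> d d0.
pose P s := forall r, a <= r <= s -> g r <= g a + d * (r - a).
pose S := [set s | a <= s <= b /\ P s].
have Sa : S a.
  split; first by rewrite lexx ab.
  move=> r /andP[ar ra]; have -> : r = a by apply/le_anti; rewrite ar ra.
  by rewrite subrr mulr0 addr0.
have hS : has_sup S.
  split; first by exists a.
  by exists b => s [/andP[]].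
pose c := sup S.
have ac : a <= c by apply: sup_upper_bound.
have cb : c <= b by apply: ge_sup; [exists a|move=> s [/andP[]]].
have C1 : forall r, a <= r < c -> g r <= g a + d * (r - a).
  move=> r /andP[ar rc].
  have cr0 : 0 < c - r by rewrite subr_gt0.
  have [s [_ Ps] ls] := sup_adherent cr0 hS.
  apply: Ps; rewrite ar /=; rewrite -/c in ls; lra.
have C2 : P c.
  move=> r /andP[ar rc].
  have [rc'|] := ltP r c; first by apply: C1; rewrite ar rc'.
  move=> cr; have -> : r = c by apply/le_anti; rewrite rc cr.
  have [ca|ac'] := eqVneq a c.
    by rewrite -ca subrr mulr0 addr0.
  have ac2 : a < c by rewrite lt_neqAle ac' ac.
  have gcc : g @ c^'- --> g c.
    apply: cvg_at_left_filter; apply: gc; by rewrite ac2 cb.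
  have hc : (fun r => g a + d * (r - a)) @ c^'- --> g a + d * (c - a).
    apply: cvgD; first exact: cvg_cst.
    apply: cvgMr; apply: cvgB; last exact: cvg_cst.
    exact: cvg_at_left_filter cvg_id.
  apply: (ler_cvg_to gcc hc).
  near=> r'; apply: C1; apply/andP; split.
    near: r'; apply: nbhs_left_ge => //.
  near: r'; exact: nbhs_left_lt.
have [cb'|] := ltP c b; last first.
  move=> bc; have -> : b = c by apply/le_anti; rewrite cb bc.
  by apply: C2; rewrite ac lexx.
have := gd c (introT andP (conj ac cb')) d d0; move=> /right_ex [e e0 He].
pose s1 := Num.min b (c + e / 2).
have cs1 : c < s1.
  rewrite /s1 lt_min cb' /=; rewrite ltrDl divr_gt0//.
have : S s1.
  split.
    apply/andP; split; first by rewrite (le_trans ac)// ltW.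
    by rewrite /s1 ge_min lexx.
  move=> r /andP[ar rs1].
  have [rc|cr] := leP r c; first by apply: C2; rewrite ar rc.
  have := He r; rewrite cr /=.
  have -> : r < c + e.
    apply: (le_lt_trans rs1); rewrite /s1 gt_min; apply/orP; right; lra.
  move=> /(_ isT) H.
  have := C2 c; rewrite ac lexx => /(_ isT) H2.
  rewrite (le_trans H)//.
  have -> : g a + d * (r - a) = g a + d * (c - a) + d * (r - c) by ring.
  by rewrite lerD2r.
move=> /(sup_upper_bound hS); rewrite -/c => /(lt_le_trans cs1); by rewrite ltxx.
Unshelve. all: by end_near. Qed.
End Dini.
Section Calc.
Context {R : realType}.

Definition rdq {V : normedModType R} (g : R -> V) (t : R) (L : V) :=
  (fun s => (s - t)^-1 *: (g s - g t)) @ t^'+ --> L.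

Lemma hd_rdq (V : normedModType R) t0 (g dg : R -> V) t :
  has_deriv_on t0 g dg -> t0 <= t -> rdq g t (dg t).
Proof.
move=> H tt; move: (H t tt); apply: cvg_trans; apply: cvg_app.
apply: within_subset => s /= ts; split; first by rewrite (le_trans tt)// ltW.
by rewrite gt_eqF.
Qed.

Lemma sub_right_cvg0 t : (fun s : R => s - t) @ t^'+ --> 0.
Proof.
rewrite -(subrr t); apply: cvgB; last exact: cvg_cst.
exact: (cvg_at_right_filter cvg_id).
Qed.

Lemma rdq_cont (V : normedModType R) (g : R -> V) t L : rdq g t L -> g @ t^'+ --> g t.
Proof.
move=> H.
have e : {near t^'+, (fun s => g t + (s - t) *: ((s - t)^-1 *: (g s - g t))) =1 g}.
  near=> s; rewrite scalerA mulfV; first by rewrite scale1r addrC subrK.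
  rewrite subr_eq0 gt_eqF//; near: s; exact: nbhs_right_gt.
suff H1 : (fun s => g t + (s - t) *: ((s - t)^-1 *: (g s - g t))) @ t^'+ --> g t + (0:R) *: L.
  by rewrite scale0r addr0 in H1; exact: cvg_trans (near_eq_cvg e) H1.
apply: cvgD; first exact: cvg_cst.
apply: cvgZ => //; exact: sub_right_cvg0.
Unshelve. all: by end_near. Qed.

Lemma rdqZ (V : normedModType R) (f : R -> R) (g : R -> V) t lf lg :
  rdq f t lf -> rdq g t lg -> rdq (fun s => f s *: g s) t (lf *: g t + f t *: lg).
Proof.
move=> Hf Hg.
have e : {near t^'+, (fun s => ((s - t)^-1 * (f s - f t)) *: g s + f t *: ((s - t)^-1 *: (g s - g t)))
   =1 (fun s => (s - t)^-1 *: (f s *: g s - f t *: g t))}.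
  near=> s => /=.
  rewrite !scalerBr !scalerA mulrBr scalerBl [f t / _]mulrC.
  by rewrite addrA subrK.
apply: cvg_trans (near_eq_cvg e) _.
apply: cvgD; last by apply: cvgZ => //; exact: cvg_cst.
apply: cvgZ => //; last exact: rdq_cont Hg.
Unshelve. all: by end_near. Qed.

Lemma rdqM (f g : R -> R) t lf lg :
  rdq f t lf -> rdq g t lg -> rdq (fun s => f s * g s) t (lf * g t + f t * lg).
Proof. move=> Hf Hg; exact: (@rdqZ R^o f g t lf lg Hf Hg). Qed.

Lemma rdq_cst (V : normedModType R) (c : V) t : rdq (fun _ => c) t 0.
Proof.
rewrite /rdq; have -> : (fun s : R => (s - t)^-1 *: (c - c)) = fun _ => 0.
  by apply/funext => s; rewrite subrr scaler0.
exact: cvg_cst.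
Qed.

Lemma rdqD (V : normedModType R) (f g : R -> V) t lf lg :
  rdq f t lf -> rdq g t lg -> rdq (fun s => f s + g s) t (lf + lg).
Proof.
move=> Hf Hg; rewrite /rdq.
have -> : (fun s => (s - t)^-1 *: (f s + g s - (f t + g t))) =
  (fun s => (s - t)^-1 *: (f s - f t) + (s - t)^-1 *: (g s - g t)).
  by apply/funext => s; rewrite -scalerDr opprD addrACA.
exact: cvgD.
Qed.

Lemma is_derive_rdq (V : normedModType R) (f : R -> V) t df :
  is_derive t (1 : R) f df -> rdq f t df.
Proof.
move=> H.
have dv : derivable f t 1 by case: H.
have Hd : 'D_1 f t = df by case: H.
move: dv; rewrite /derivable => /cvg_ex [l Hl].
have Hl' : (fun h : R => h^-1 *: (f (h *: 1 + t) - f t)) @ 0^' --> df.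
  rewrite -Hd /derive; rewrite (cvg_lim _ Hl) //.
rewrite /rdq; apply/cvgrPdist_lt => e e0.
move/cvgrPdist_lt: Hl' => /(_ e e0).
rewrite /dnbhs /within /at_right /= => /nbhs_ballP[d /= d0 Hd'].
apply/nbhs_ballP; exists d => // s /= hs ts.
have := Hd' (s - t).
rewrite -[(s - t)%:A]/((s - t) * 1) mulr1 subrK; apply; last by rewrite subr_eq0 gt_eqF.
by rewrite /ball /= sub0r normrN distrC.
Qed.

Lemma hd_wc (V : normedModType R) t0 (g dg : R -> V) x :
  has_deriv_on t0 g dg -> t0 <= x ->
  g @ within (fun s => t0 <= s) (nbhs x) --> g x.
Proof.
move=> H tx.
have Hx1 := H x tx.
have e : {near within (fun s => t0 <= s /\ s != x) (nbhs x),
   (fun s => g x + (s - x) *: ((s - x)^-1 *: (g s - g x))) =1 g}.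
  rewrite /prop_near1 /= /within /=; apply: nearW => s [_ sx].
  by rewrite scalerA mulfV ?subr_eq0// scale1r addrC subrK.
have H2 : g @ within (fun s => t0 <= s /\ s != x) (nbhs x) --> g x.
  suff H1 : (fun s => g x + (s - x) *: ((s - x)^-1 *: (g s - g x))) @
     within (fun s => t0 <= s /\ s != x) (nbhs x) --> g x + (0:R) *: dg x.
    by rewrite scale0r addr0 in H1; exact: cvg_trans (near_eq_cvg e) H1.
  apply: cvgD; first exact: cvg_cst.
  apply: cvgZ => //.
  rewrite -(subrr x); apply: cvgB; last exact: cvg_cst.
  apply: cvg_within_filter; exact: cvg_id.
apply/cvgrPdist_lt => e' e0.
move/cvgrPdist_lt: H2 => /(_ e' e0).
rewrite !near_withinE; apply: filterS => s Hs ts.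
have [->|sx] := eqVneq s x; first by rewrite subrr normr0.
exact: Hs.
Qed.

Lemma wc_cont (V : normedModType R) t0 (g : R -> V) x (l : V) :
  t0 < x -> g @ within (fun s => t0 <= s) (nbhs x) --> l -> g @ x --> l.
Proof.
move=> tx H; apply/cvgrPdist_lt => e e0.
move/cvgrPdist_lt: H => /(_ e e0); rewrite near_withinE => H.
near=> s; apply: (near H s); last first.
  apply: ltW; near: s; exact: (@cvgr_gt _ _ (nbhs x) _ id x cvg_id t0 tx).
by [].
Unshelve. all: by end_near.
Qed.

Lemma wc_right (V : normedModType R) t0 (g : R -> V) x (l : V) :
  t0 <= x -> g @ within (fun s => t0 <= s) (nbhs x) --> l -> g @ x^'+ --> l.
Proof.
move=> tx; apply: cvg_trans; apply: cvg_app.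
by apply: within_subset => s /= xs; rewrite (le_trans tx)// ltW.
Qed.

Lemma cont_on_wc (V : normedModType R) t0 (g : R -> V) x :
  cont_on t0 g -> t0 <= x -> g @ within (fun s => t0 <= s) (nbhs x) --> g x.
Proof.
move=> /subspace_continuousP H tx.
have := H x; rewrite /= in_itv /= andbT => /(_ tx).
apply: cvg_trans; apply: cvg_app; apply: within_subset => s /=.
by rewrite in_itv /= andbT.
Qed.

Lemma dq_bound (V : normedModType R) (g : R -> V) t (L : V) : rdq g t L ->
  \forall s \near t^'+, `|g s - g t| <= (`|L| + 1) * (s - t).
Proof.
move=> /cvgrPdist_le /(_ 1 ltr01) H.
near=> s.
have ts : t < s by near: s; exact: nbhs_right_gt.
have h : `|L - (s - t)^-1 *: (g s - g t)| <= 1 by near: s; exact: H.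
have e : g s - g t = (s - t) *: ((s - t)^-1 *: (g s - g t)).
  by rewrite scalerA mulfV ?scale1r // subr_eq0 gt_eqF.
rewrite e normrZ gtr0_norm ?subr_gt0 // mulrC.
apply: ler_wpM2r; first by rewrite subr_ge0 ltW.
set D := (s - t)^-1 *: (g s - g t) in h *.
have := ler_normB L (L - D).
rewrite opprB addrC subrK.
lra.
Unshelve. all: by end_near. Qed.
End Calc.
Section IP.
Variables (R : realType) (V : normedModType R) (ip : V -> V -> R) (K : R).
Hypothesis ipC : forall a b, ip a b = ip b a.
Hypothesis ipDl : forall k a b c, ip (k *: a + b) c = k * ip a c + ip b c.
Hypothesis ipK : forall a b, `|ip a b| <= K * (`|a| * `|b|).

Lemma ipDl1 a b c : ip (a + b) c = ip a c + ip b c.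
Proof. by rewrite -[a in LHS]scale1r ipDl mul1r. Qed.
Lemma ip0l c : ip 0 c = 0.
Proof. by have := ipDl1 0 0 c; rewrite addr0; lra. Qed.
Lemma ipZl k a c : ip (k *: a) c = k * ip a c.
Proof. by rewrite -[k *: a]addr0 ipDl ip0l addr0. Qed.
Lemma ipNl a c : ip (- a) c = - ip a c.
Proof. by rewrite -scaleN1r ipZl mulN1r. Qed.
Lemma ipBl a b c : ip (a - b) c = ip a c - ip b c.
Proof. by rewrite ipDl1 ipNl. Qed.
Lemma ipDr a b c : ip c (a + b) = ip c a + ip c b.
Proof. by rewrite ipC ipDl1 ![ip _ c]ipC. Qed.
Lemma ipZr k a c : ip c (k *: a) = k * ip c a.
Proof. by rewrite ipC ipZl ipC. Qed.
Lemma ipNr a c : ip c (- a) = - ip c a.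
Proof. by rewrite ipC ipNl ipC. Qed.
Lemma ipBr a b c : ip c (a - b) = ip c a - ip c b.
Proof. by rewrite ipDr ipNr. Qed.
Lemma ip0r c : ip c 0 = 0.
Proof. by rewrite ipC ip0l. Qed.

Lemma cvg0_le T (F : set_system T) (FF : Filter F) (h m : T -> R) :
  (forall x, `|h x| <= m x) -> m @ F --> 0 -> h @ F --> 0.
Proof.
move=> hm /cvgr0Pnorm_le m0; apply/cvgr0Pnorm_le => e e0.
have := m0 e e0; apply: filterS => x mx.
by rewrite (le_trans (hm x))// (le_trans (ler_norm _)).
Qed.

Lemma cvg_ip T (F : set_system T) (FF : Filter F) (f g : T -> V) a b :
  f @ F --> a -> g @ F --> b -> (fun x => ip (f x) (g x)) @ F --> ip a b.
Proof.
move=> fa gb.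
have -> : (fun x => ip (f x) (g x)) =
   (fun x => ip a b + (ip (f x - a) (g x) + ip a (g x - b))).
  apply/funext => x; rewrite ipBl ipBr; lra.
rewrite -[X in _ --> X]addr0; apply: cvgD; first exact: cvg_cst.
apply: (@cvg0_le _ _ _ _ (fun x => K * (`|f x - a| * `|g x|) + K * (`|a| * `|g x - b|))).
  move=> x; rewrite (le_trans (ler_normD _ _))//; apply: lerD; exact: ipK.
have fa0 : (fun x => `|f x - a|) @ F --> 0.
  rewrite -(@normr0 _ V); apply: cvg_norm; rewrite -(subrr a); apply: cvgB => //; exact: cvg_cst.
have gb0 : (fun x => `|g x - b|) @ F --> 0.
  rewrite -(@normr0 _ V); apply: cvg_norm; rewrite -(subrr b); apply: cvgB => //; exact: cvg_cst.
rewrite -[X in _ --> X]addr0; apply: cvgD.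
  rewrite -(mulr0 K); apply: cvgMr; rewrite -(mul0r `|b|); apply: cvgM => //.
  exact: cvg_norm.
rewrite -(mulr0 K); apply: cvgMr; rewrite -(mulr0 `|a|); apply: cvgMr => //.
Qed.
Hypothesis ipge0 : forall a, 0 <= ip a a.

Lemma cvg0_le_near T (F : set_system T) (FF : Filter F) (h m : T -> R) :
  (\forall x \near F, `|h x| <= m x) -> m @ F --> 0 -> h @ F --> 0.
Proof.
move=> hm /cvgr0Pnorm_le m0; apply/cvgr0Pnorm_le => e e0.
have := m0 e e0; apply: filterS2 hm => x hx mx.
by rewrite (le_trans hx)// (le_trans (ler_norm _)).
Qed.

Lemma rdq_ip (g1 g2 : R -> V) t l1 l2 :
  rdq g1 t l1 -> rdq g2 t l2 ->
  rdq (fun s => ip (g1 s) (g2 s)) t (ip l1 (g2 t) + ip (g1 t) l2).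
Proof.
move=> H1 H2; rewrite /rdq.
have -> : (fun s => (s - t)^-1 *: (ip (g1 s) (g2 s) - ip (g1 t) (g2 t))) =
  (fun s => ip ((s - t)^-1 *: (g1 s - g1 t)) (g2 s) + ip (g1 t) ((s - t)^-1 *: (g2 s - g2 t))).
  apply/funext => s; rewrite ipZl ipZr ipBl ipBr.
  rewrite -[_ *: _]/(_ * _); ring.
apply: cvgD; apply: cvg_ip => //; first exact: rdq_cont H2.
exact: cvg_cst.
Qed.

Lemma ip_sq_le2 p q : ip p p - ip q q <= 2 * ip (p - q) p.
Proof.
have := ipge0 (p - q); rewrite !ipBl !ipBr (ipC q p); lra.
Qed.

Lemma ip_sum_le p q : ip (p + q) (p + q) <= 2 * ip p p + 2 * ip q q.
Proof.
have := ipge0 (p - q); rewrite !ipBl !ipBr ipDl1 !ipDr (ipC q p); lra.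
Qed.

Lemma ip_expand p q c : ip (p + c *: q) (p + c *: q) = ip p p + 2 * c * ip p q + c ^+ 2 * ip q q.
Proof. rewrite ipDl1 !ipDr !ipZl !ipZr (ipC q p); ring. Qed.

Section Core.
Variables (t0 tp : R) (eps eps1 eps2 a : R -> R) (z zd : R -> V).
Hypothesis Htp : t0 < tp.
Hypothesis Hz : has_deriv_on t0 z zd.
Hypothesis Hzd : cont_on t0 zd.
Hypothesis He : has_deriv_on t0 eps eps1.
Hypothesis He1 : has_deriv_on t0 eps1 eps2.
Hypothesis Ha : forall t, tp <= t -> is_derive t (1:R) a (2 * eps t * a t).
Hypothesis Ha0 : forall t, 0 <= a t.
Hypothesis Hmono : forall s t, t0 <= s -> t0 <= t ->
  ip ((zd s + eps s *: z s) - (zd t + eps t *: z t)) (z s - z t) <= 0.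
Hypothesis Hlip : forall t, t0 <= t -> exists L, \forall s \near t^'+,
  `|(zd s + eps s *: z s) - (zd t + eps t *: z t)| <= L * (s - t).
Hypothesis Hc2 : forall t, tp <= t -> 2 * eps t * eps1 t + eps2 t <= 0.

Let W s := a s * (ip (zd s) (zd s) + eps1 s * ip (z s) (z s)).

Lemma vec_id (A B C D : V) : (A + C) - (B + D) - (C - D) = A - B.
Proof.
by rewrite opprB opprD -addrA addrC -!addrA addKr [- C + _]addrC addrK addrC.
Qed.

Lemma W_noninc t : tp <= t -> W t <= W tp.
Proof.
move=> tpt; apply: dini => //.
  move=> s /andP[tps st].
  have t0s : t0 < s by apply: lt_trans tps.
  have ca : {for s, continuous a}.
    apply: differentiable_continuous; apply/derivable1_diffP.
    by case: (Ha (ltW tps)).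
  have czd : zd @ s --> zd s by apply: (wc_cont t0s); apply: cont_on_wc => //; exact: ltW.
  have cz : z @ s --> z s by apply: (wc_cont t0s); apply: (hd_wc Hz); exact: ltW.
  have ce1 : eps1 @ s --> eps1 s by apply: (wc_cont t0s); apply: (hd_wc He1); exact: ltW.
  apply: cvgM => //; apply: cvgD; first exact: cvg_ip.
  by apply: cvgM => //; exact: cvg_ip.
move=> s /andP[tps st] d d0.
have t0s : t0 <= s by rewrite ltW// (lt_le_trans Htp).
pose v s := zd s + eps s *: z s.
pose E s' := (s' - s)^-1 * (a s' - a s) * ip (zd s') (zd s')
   + 2 * a s * ip ((s' - s)^-1 *: (v s' - v s)) (zd s' - (s' - s)^-1 *: (z s' - z s))
   - 2 * a s * ip ((s' - s)^-1 *: (eps s' *: z s' - eps s *: z s)) (zd s')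
   + (s' - s)^-1 * (a s' * eps1 s' * ip (z s') (z s') - a s * eps1 s * ip (z s) (z s)).
have HA : \forall s' \near s^'+, W s' - W s <= (s' - s) * E s'.
  near=> s'.
  have ss' : s < s' by near: s'; exact: nbhs_right_gt.
  have h0 : s' - s != 0 by rewrite subr_eq0 gt_eqF.
  have hp : 0 < (s' - s)^-1 by rewrite invr_gt0 subr_gt0.
  have mono := Hmono (le_trans t0s (ltW ss')) t0s.
  rewrite -/(v s') -/(v s) in mono.
  have key : (s' - s) * E s' = (a s' - a s) * ip (zd s') (zd s')
      + 2 * a s * (ip (zd s' - zd s) (zd s')) - 2 * a s * (s' - s)^-1 * ip (v s' - v s) (z s' - z s)
      + (a s' * eps1 s' * ip (z s') (z s') - a s * eps1 s * ip (z s) (z s)).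
    have -> : zd s' - zd s = (v s' - v s) - (eps s' *: z s' - eps s *: z s).
      by rewrite /v vec_id.
    rewrite /E !ipZl ipBr ipZr !ipBl.
    by field.
  rewrite key /W.
  have := ip_sq_le2 (zd s') (zd s).
  have : 0 <= a s * (s' - s)^-1 * - ip (v s' - v s) (z s' - z s).
    by apply: mulr_ge0; [apply: mulr_ge0 => //; exact: ltW | rewrite oppr_ge0].
  have := Ha0 s.
  nra.
have HB : E @ s^'+ --> a s * ((2 * eps s * eps1 s + eps2 s) * ip (z s) (z s)).
  have rda : rdq a s (2 * eps s * a s) by apply: is_derive_rdq; exact: Ha.
  have rdz : rdq z s (zd s) by exact: hd_rdq Hz t0s.
  have rde : rdq eps s (eps1 s) by exact: hd_rdq He t0s.
  have rde1 : rdq eps1 s (eps2 s) by exact: hd_rdq He1 t0s.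
  have czd : zd @ s^'+ --> zd s by exact: (wc_right t0s (cont_on_wc Hzd t0s)).
  have T1 : (fun s' => (s' - s)^-1 * (a s' - a s) * ip (zd s') (zd s')) @ s^'+ -->
            2 * eps s * a s * ip (zd s) (zd s).
    apply: cvgM; first exact: rda.
    exact: cvg_ip.
  have T2 : (fun s' => ip ((s' - s)^-1 *: (v s' - v s)) (zd s' - (s' - s)^-1 *: (z s' - z s)))
            @ s^'+ --> 0.
    have [L HL] := Hlip t0s.
    apply: (@cvg0_le_near _ _ _ _ (fun s' => `|K| * (`|L| * `|zd s' - (s' - s)^-1 *: (z s' - z s)|))).
      near=> s'.
      have ss' : s < s' by near: s'; exact: nbhs_right_gt.
      apply: (le_trans (ipK _ _)).
      apply: (@le_trans _ _ (`|K| * (`|(s' - s)^-1 *: (v s' - v s)| * `|zd s' - (s' - s)^-1 *: (z s' - z s)|))).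
        by rewrite ler_wpM2r ?mulr_ge0// real_ler_norm// num_real.
      rewrite ler_wpM2l// ler_wpM2r//.
      rewrite normrZ gtr0_norm ?invr_gt0 ?subr_gt0//.
      rewrite ler_pdivrMl ?subr_gt0// (le_trans (near HL s' _))//.
      by rewrite mulrC ler_pM2l ?subr_gt0// real_ler_norm// num_real.
    rewrite -(mulr0 `|K|); apply: cvgMr; rewrite -(mulr0 `|L|); apply: cvgMr.
    rewrite -(@normr0 _ V); apply: cvg_norm.
    rewrite -(subrr (zd s)); apply: cvgB => //.
  have T3 : (fun s' => ip ((s' - s)^-1 *: (eps s' *: z s' - eps s *: z s)) (zd s')) @ s^'+ -->
            ip (eps1 s *: z s + eps s *: zd s) (zd s).
    apply: cvg_ip => //.
    exact: (rdqZ rde rdz).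
  have T4 := rdqM (rdqM rda rde1) (rdq_ip rdz rdz).
  have HB' := cvgD (cvgB (cvgD T1 (cvgM (cvg_cst (2 * a s)) T2)) (cvgM (cvg_cst (2 * a s)) T3)) T4.
  have -> : a s * ((2 * eps s * eps1 s + eps2 s) * ip (z s) (z s)) =
     2 * eps s * a s * ip (zd s) (zd s) + 2 * a s * 0 - 2 * a s * ip (eps1 s *: z s + eps s *: zd s) (zd s) +
     ((2 * eps s * a s * eps1 s + a s * eps2 s) * ip (z s) (z s) +
      a s * eps1 s * (ip (zd s) (z s) + ip (z s) (zd s))).
    rewrite ipDl1 !ipZl (ipC (z s) (zd s)); ring.
  exact: HB'.
have HC : a s * ((2 * eps s * eps1 s + eps2 s) * ip (z s) (z s)) < d.
  apply: (le_lt_trans _ d0); apply: mulr_ge0_le0 => //.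
  by apply: mulr_le0_ge0 => //; exact: Hc2.
have HD : \forall s' \near s^'+, E s' < d := cvgr_lt _ HB d HC.
near=> s'.
have ss' : s < s' by near: s'; exact: nbhs_right_gt.
have h2 : W s' - W s <= (s' - s) * E s' by near: s'; exact: HA.
have h1 : E s' < d by near: s'; exact: HD.
have : (s' - s) * E s' <= d * (s' - s).
  by rewrite mulrC ler_wpM2r ?subr_ge0 ?ltW.
lra.
Unshelve. all: by end_near. Qed.
End Core.
Section Bounded.
Variables (t0 : R) (eps : R -> R) (z zd : R -> V) (zb : V).
Hypothesis Hz : has_deriv_on t0 z zd.
Hypothesis Hepos : forall t, t0 <= t -> 0 < eps t.
Hypothesis Hmono0 : forall t, t0 <= t -> ip (zd t + eps t *: z t) (z t - zb) <= 0.

Lemma traj_bounded t : t0 <= t ->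
  ip (z t - zb) (z t - zb) <= Num.max (ip (z t0 - zb) (z t0 - zb)) (ip zb zb).
Proof.
move=> t0t.
pose q s := ip (z s - zb) (z s - zb).
pose c := Num.max (q t0) (ip zb zb).
pose g s := Num.max (q s) c.
suff : g t <= g t0.
  rewrite /g /c -/(q t) -/(q t0).
  have -> : Num.max (q t0) (Num.max (q t0) (ip zb zb)) = Num.max (q t0) (ip zb zb).
    by rewrite maxA maxxx.
  by apply: le_trans; rewrite le_max lexx.
apply: dini => //.
  move=> s /andP[t0s st].
  have cz : z @ s --> z s by apply: (wc_cont t0s); apply: (hd_wc Hz); exact: ltW.
  apply: continuous_max; last exact: cvg_cst.
  by apply: cvg_ip; apply: cvgB => //; exact: cvg_cst.
move=> s /andP[t0s st] d d0.
have rdy : rdq (fun s => z s - zb) s (zd s + 0).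
  exact: (rdqD (hd_rdq Hz t0s) (rdq_cst (- zb) s)).
rewrite addr0 in rdy.
have rdqq := rdq_ip rdy rdy.
have [qc|cq] := ltP (q s) c.
  have cq := rdq_cont rdqq.
  have Hn : \forall s' \near s^'+, q s' < c := cvgr_lt _ cq c qc.
  near=> s'.
  have ss' : s < s' by near: s'; exact: nbhs_right_gt.
  have h1 : q s' < c by near: s'; exact: Hn.
  rewrite /g (max_r (ltW h1)) (max_r (ltW qc)).
  have : 0 < d * (s' - s) by rewrite mulr_gt0// subr_gt0.
  lra.
have Lq : ip (zd s) (z s - zb) + ip (z s - zb) (zd s) <= 0.
  rewrite (ipC (z s - zb)).
  have hm := Hmono0 t0s.
  have e0 := Hepos t0s.
  have hb : 0 <= ip zb zb + 2 * ip zb (z s - zb) + q s.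
    have := ipge0 (zb + (z s - zb)).
    rewrite [ip (zb + _) _]ipDl1 [ip zb (zb + _)]ipDr [ip (z s - zb) (zb + _)]ipDr.
    rewrite (ipC (z s - zb) zb) -/(q s); lra.
  have czb : ip zb zb <= q s by apply: le_trans cq; rewrite le_max lexx orbT.
  rewrite ipDl1 ipZl in hm.
  have E1 : ip (z s) (z s - zb) = q s + ip zb (z s - zb).
    by rewrite /q -ipDl1 subrK.
  rewrite E1 in hm.
  have : 0 <= eps s * (q s + ip zb (z s - zb)).
    apply: mulr_ge0; first exact: ltW.
    lra.
  lra.
have HD : \forall s' \near s^'+, (s' - s)^-1 *: (q s' - q s) < d := cvgr_lt _ rdqq d (le_lt_trans Lq d0).
near=> s'.
have ss' : s < s' by near: s'; exact: nbhs_right_gt.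
have h1 : (s' - s)^-1 *: (q s' - q s) < d by near: s'; exact: HD.
have h2 : q s' <= q s + d * (s' - s).
  rewrite -[_ *: _]/(_ * _) mulrC ltr_pdivrMr ?subr_gt0// in h1; lra.
rewrite /g (max_l cq) ge_max h2 /=.
have : 0 < d * (s' - s) by rewrite mulr_gt0// subr_gt0.
lra.
Unshelve. all: by end_near. Qed.
End Bounded.
End IP.
Section Concrete.
Context {R : realType} {X Y : normedModType R}.
Variables (ipX : X -> X -> R) (ipY : Y -> Y -> R).
Hypothesis HipX : is_inner_product ipX.
Hypothesis HipY : is_inner_product ipY.

Lemma ip_cs (Z : normedModType R) (ip : Z -> Z -> R) :
  is_inner_product ip -> forall a b, `|ip a b| <= `|a| * `|b|.
Proof.
case=> iC iD iN.
have key : forall a b, 2 * ip a b <= `|a| ^+ 2 + `|b| ^+ 2.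
  move=> a b; have := iN (a - b).
  rewrite !(ipBl iD) !(ipBr iC iD) (iC b a) !iN => h.
  have : 0 <= `|a - b| ^+ 2 by rewrite sqr_ge0.
  lra.
move=> a b.
have [a0|an0] := eqVneq `|a| 0.
  move/eqP: a0; rewrite normr_eq0 => /eqP ->.
  by rewrite (ip0l iD) !normr0 mul0r.
have [b0|bn0] := eqVneq `|b| 0.
  move/eqP: b0; rewrite normr_eq0 => /eqP ->.
  by rewrite (ip0r iC iD) !normr0 mulr0.
have ap : 0 < `|a| by rewrite lt_neqAle eq_sym an0 normr_ge0.
have bp : 0 < `|b| by rewrite lt_neqAle eq_sym bn0 normr_ge0.
have H1 := key (`|b| *: a) (`|a| *: b).
have H2 := key (`|b| *: a) (- (`|a| *: b)).
rewrite (ipZl iD) (ipZr iC iD) !normrZ !normr_id in H1.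
rewrite (ipNr iC iD) (ipZl iD) (ipZr iC iD) normrN !normrZ !normr_id in H2.
have ab : 0 < `|a| * `|b| by rewrite mulr_gt0.
rewrite ler_norml; apply/andP; split.
  suff : - (2 * (`|a| * `|b|)) * (`|a| * `|b|) <= 2 * (`|a| * `|b|) * ip a b by nra.
  nra.
suff : 2 * (`|a| * `|b|) * ip a b <= 2 * (`|a| * `|b|) * (`|a| * `|b|) by nra.
nra.
Qed.

Variables (f : X -> R) (gf : X -> X).
Hypothesis Hfconv : convex_fun f.
Hypothesis Hfdiff : forall x, differentiable f x /\ forall h, 'd f x h = ipX (gf x) h.

Lemma dir_lim x h : (fun t => t^-1 * (f (t *: h + x) - f x)) @ 0^'+ --> ipX (gf x) h.
Proof.
have [dx dd] := Hfdiff x.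
have := diff_derivable (v:=h) dx; rewrite /derivable => /cvg_ex [l Hl].
have e : 'D_h f x = l by rewrite /derive (cvg_lim _ Hl).
rewrite -dd -deriveE // e.
move: Hl; apply: cvg_trans; apply: cvg_app.
by apply: within_subset => t /= t0; rewrite gt_eqF.
Qed.

Lemma grad_ineq x y : f x + ipX (gf x) (y - x) <= f y.
Proof.
have H := dir_lim (x:=x) (h:=y - x).
suff : ipX (gf x) (y - x) <= f y - f x by lra.
apply: (ler_cvg_to H (cvg_cst (f y - f x))).
near=> t.
have t0 : 0 < t by near: t; exact: nbhs_right_gt.
have t1 : t <= 1 by near: t; apply: nbhs_right_le; exact: ltr01.
have cv := Hfconv y x (introT andP (conj (ltW t0) t1)).
have -> : t *: (y - x) + x = t *: y + (1 - t) *: x.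
  by rewrite scalerBr scalerBl scale1r addrA addrAC.
rewrite mulrC ler_pdivrMr //.
nra.
Unshelve. all: by end_near. Qed.

Lemma grad_mono x y : 0 <= ipX (gf x - gf y) (x - y).
Proof.
case: HipX => iC iD iN.
have h1 := @grad_ineq x y.
have h2 := @grad_ineq y x.
rewrite (ipBl iD).
rewrite -[y - x]opprB (ipNr iC iD) in h1.
lra.
Qed.

Variables (A : {linear X -> Y}) (As : Y -> X) (b : Y).
Hypothesis HAs : forall x y, ipY (A x) y = ipX x (As y).

Lemma saddle_gap xb lb x : optsol f A b xb -> multipliers f gf A As b lb ->
  f xb <= f x + ipY lb (A x - b).
Proof.
case: HipX => iC iD iN; case: HipY => jC jD jN.
move=> [Axb optb] [xb' [Axb' optb'] g0].
have e : f xb = f xb' by apply/le_anti; rewrite optb // optb'.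
have h := @grad_ineq xb' x.
have e2 : gf xb' = - As lb by apply/eqP; rewrite -addr_eq0 g0.
rewrite e2 (ipNl iD) iC -HAs linearB /= Axb' jC in h.
lra.
Qed.

Lemma saddle_grad xb lb : optsol f A b xb -> multipliers f gf A As b lb ->
  gf xb + As lb = 0.
Proof.
move=> Hxb Hlb.
case: (HipX) => iC iD iN; case: (HipY) => jC jD jN.
have [Axb _] := Hxb.
set w := gf xb + As lb.
suff : ipX w w <= 0.
  rewrite iN => h; apply/eqP; rewrite -normr_eq0; apply/eqP.
  have : `|w| ^+ 2 = 0 by apply/le_anti; rewrite h sqr_ge0.
  by move/eqP; rewrite sqrf_eq0 => /eqP.
have H := dir_lim (x:=xb) (h:=-w).
have L : - ipX (- w) (As lb) <= ipX (gf xb) (- w).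
  apply: (ler_cvg_to (cvg_cst _) H).
  near=> t.
  have t0 : 0 < t by near: t; exact: nbhs_right_gt.
  have g := @saddle_gap xb lb (t *: (- w) + xb) Hxb Hlb.
  set mw := - w in g *.
  rewrite linearD linearZ /= Axb addrK jC (ipZl jD) HAs in g.
  rewrite mulrC ler_pdivlMr //.
  nra.
rewrite (ipNr iC iD) (ipNl iD) opprK in L.
have : ipX w w = ipX (gf xb) w + ipX (As lb) w by rewrite /w ipDl1.
rewrite (iC (As lb)); lra.
Unshelve. all: by end_near. Qed.

Hypothesis HAcont : continuous A.

Lemma A_bound : exists k, 0 <= k /\ forall x, `|A x| <= k * `|x|.
Proof.
have := @continuous_linear_bounded _ _ _ (0:X) A (@HAcont 0).
move=> /linear_boundedP [M [_ HM]].
exists (`|M| + 1); split; first by rewrite addr_ge0.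
apply: HM.
have := real_ler_norm (num_real M); lra.
Qed.

Lemma As_lip k : 0 <= k -> (forall x, `|A x| <= k * `|x|) ->
  forall l1 l2, `|As l1 - As l2| <= k * `|l1 - l2|.
Proof.
move=> k0 Hk l1 l2.
case: (HipX) => iC iD iN; case: (HipY) => jC jD jN.
set w := As l1 - As l2.
have e : `|w| ^+ 2 = ipY (A w) (l1 - l2).
  by rewrite -iN {2}/w (ipBr iC iD) -!HAs (ipBr jC jD).
have h1 := ip_cs HipY (A w) (l1 - l2).
have h2 := Hk w.
have hw := normr_ge0 w.
have hl := normr_ge0 (l1 - l2).
have h3 : `|w| ^+ 2 <= k * `|w| * `|l1 - l2|.
  rewrite e (le_trans (ler_norm _))// (le_trans h1)//.
  by apply: ler_wpM2r.
have [w0|wp] := eqVneq `|w| 0.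
  by rewrite w0 mulr_ge0.
have wpos : 0 < `|w| by rewrite lt_neqAle eq_sym wp hw.
rewrite expr2 -mulrA [k * _]mulrC -mulrA ler_pM2l // in h3.
by rewrite mulrC.
Qed.
End Concrete.
Section ZL.
Context {V : zmodType}.
Lemma zode1 (a b c d : V) : a + b + c + d = 0 -> a + d = - (b + c).
Proof. move=> h; apply/eqP; rewrite -addr_eq0 -h; apply/eqP.
by rewrite addrA [a + d + b]addrAC [LHS]addrAC. Qed.
Lemma zode2 (a b c d : V) : a + (b - c) + d = 0 -> a + d = c - b.
Proof. move=> h; apply/eqP; rewrite -subr_eq0 opprB -h; apply/eqP.
by rewrite addrAC. Qed.
Lemma zl3 (a b c d : V) : - (a + b) - - (c + d) = - ((a - c) + (b - d)).
Proof. by rewrite opprK !opprD !opprK addrACA. Qed.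
Lemma zl4 (a b c : V) : (a - b) - (c - b) = a - c.
Proof. by rewrite opprB addrA subrK. Qed.
End ZL.
Theorem theorem4p1
  (R : realType) (X Y : completeNormedModType R)
  (ipX : X -> X -> R) (ipY : Y -> Y -> R)
  (HipX : is_inner_product ipX) (HipY : is_inner_product ipY)
  (f : X -> R) (gf : X -> X)
  (Hfconv : convex_fun f)
  (Hfdiff : forall x, differentiable f x /\ forall h, 'd f x h = ipX (gf x) h)
  (Hgfcont : continuous gf)
  (Hgflip : forall r : R, exists Lc : R, forall x y : X,
      `|x| <= r -> `|y| <= r -> `|gf x - gf y| <= Lc * `|x - y|)
  (A : {linear X -> Y}) (HAcont : continuous A)
  (As : Y -> X) (HAs : forall x y, ipY (A x) y = ipX x (As y))
  (b : Y)
  (t0 : R) (Ht0 : 0 <= t0)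
  (eps eps1 eps2 : R -> R)
  (Heps_pos : forall t, t0 <= t -> 0 < eps t)
  (Heps_d1 : has_deriv_on t0 eps eps1)
  (Heps_d2 : has_deriv_on t0 eps1 eps2)
  (Heps_c2 : cont_on t0 eps2)
  (Heps_lim : eps @ +oo --> 0)
  (HSM : exists xb lb, optsol f A b xb /\ multipliers f gf A As b lb)
  (x xd : R -> X) (l ld : R -> Y)
  (Hx : has_deriv_on t0 x xd) (Hxd : cont_on t0 xd)
  (Hl : has_deriv_on t0 l ld) (Hld : cont_on t0 ld)
  (HODEx : forall t, t0 <= t -> xd t + gf (x t) + As (l t) + eps t *: x t = 0)
  (HODEl : forall t, t0 <= t -> ld t + (b - A (x t)) + eps t *: l t = 0)
  (tp : R) (Htp : t0 <= tp)
  (Hcond1 : forall t, tp <= t -> 0 <= eps t ^+ 2 + eps1 t)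
  (Hcond2 : forall t, tp <= t -> 2 * eps t * eps1 t + eps2 t <= 0) :
  let rho := fun t => \int[lebesgue_measure]_(s in `[t0, t]) eps s in
  let g := fun t => expR (- (2 * rho t)) + eps t ^+ 2 in
  forall xb lb, optsol f A b xb -> multipliers f gf A As b lb ->
  [/\ bigO_pinfty (fun t => pnorm2 (xd t + eps t *: (x t - xb)) (ld t + eps t *: (l t - lb))) g,
      bigO_pinfty (fun t => eps t * (lagr ipY f A b (x t) lb - lagr ipY f A b xb (l t))) g &
      bigO_pinfty (fun t => pnorm2 ((Top gf A As b (x t) (l t)).1 - (Top gf A As b xb lb).1)
             ((Top gf A As b (x t) (l t)).2 - (Top gf A As b xb lb).2)) g].
Proof.
move=> rho g xb lb Hxb Hlb.
case: (HipX) => iC iD iN; case: (HipY) => jC jD jN.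
have [Axb _] := Hxb.
have gz := saddle_grad HipX HipY Hfconv Hfdiff HAs Hxb Hlb.
pose ip2 (p q : X * Y) := ipX p.1 q.1 + ipY p.2 q.2.
have ip2C : forall p q, ip2 p q = ip2 q p by move=> p q; rewrite /ip2 iC jC.
have ip2D : forall k p q r, ip2 (k *: p + q) r = k * ip2 p r + ip2 q r.
  by move=> k p q r; rewrite /ip2 /= iD jD; ring.
have ip2K : forall p q, `|ip2 p q| <= 2 * (`|p| * `|q|).
  move=> p q; rewrite /ip2 (le_trans (ler_normD _ _))//.
  have h1 := ip_cs HipX p.1 q.1; have h2 := ip_cs HipY p.2 q.2.
  have n1 : `|p.1| <= `|p| by rewrite prod_normE le_max lexx.
  have n2 : `|p.2| <= `|p| by rewrite prod_normE le_max lexx orbT.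
  have m1 : `|q.1| <= `|q| by rewrite prod_normE le_max lexx.
  have m2 : `|q.2| <= `|q| by rewrite prod_normE le_max lexx orbT.
  have := ler_pM (normr_ge0 _) (normr_ge0 _) n1 m1.
  have := ler_pM (normr_ge0 _) (normr_ge0 _) n2 m2.
  lra.
have ip2ge0 : forall p, 0 <= ip2 p p.
  by move=> p; rewrite /ip2 iN jN addr_ge0 // sqr_ge0.
pose z t := (x t, l t). pose zd t := (xd t, ld t). pose zb := (xb, lb).
have Hz : has_deriv_on t0 z zd.
  by move=> t tt; exact: (cvg_pair (Hx t tt) (Hl t tt)).
have Hzd : cont_on t0 zd.
  apply/subspace_continuousP => t At.
  move/subspace_continuousP: Hxd => /(_ t At) h1.
  move/subspace_continuousP: Hld => /(_ t At) h2.
  exact: cvg_pair h1 h2.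
have vx : forall t, t0 <= t -> xd t + eps t *: x t = - (gf (x t) + As (l t)).
  by move=> t tt; apply: zode1; exact: HODEx t tt.
have vl : forall t, t0 <= t -> ld t + eps t *: l t = A (x t) - b.
  by move=> t tt; apply: zode2; exact: HODEl t tt.
have Hmono : forall s t, t0 <= s -> t0 <= t ->
    ip2 ((zd s + eps s *: z s) - (zd t + eps t *: z t)) (z s - z t) <= 0.
  move=> s t ts tt; rewrite /ip2 /= vx // vx // vl // vl //.
  have := grad_mono HipX Hfconv Hfdiff (x s) (x t).
  rewrite (ipBl iD).
  have a1 : ipX (As (l s)) (x s - x t) = ipY (A (x s)) (l s) - ipY (A (x t)) (l s).
    by rewrite iC -HAs linearB (ipBl jD).
  have a2 : ipX (As (l t)) (x s - x t) = ipY (A (x s)) (l t) - ipY (A (x t)) (l t).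
    by rewrite iC -HAs linearB (ipBl jD).
  have a3 : ipY (A (x s)) (l s - l t) = ipY (A (x s)) (l s) - ipY (A (x s)) (l t).
    by rewrite (ipBr jC jD).
  have a4 : ipY (A (x t)) (l s - l t) = ipY (A (x t)) (l s) - ipY (A (x t)) (l t).
    by rewrite (ipBr jC jD).
  rewrite zl3 zl4 (ipNl iD) (ipDl1 iD) (ipBl iD) (ipBl iD) (ipBl jD) a1 a2 a3 a4.
  lra.
have [kA [kA0 HkA]] := A_bound HAcont.
have HAsl := As_lip HipX HipY HAs kA0 HkA.
have Hlip : forall t, t0 <= t -> exists L, \forall s \near t^'+,
    `|(zd s + eps s *: z s) - (zd t + eps t *: z t)| <= L * (s - t).
  move=> t tt.
  have [Lc HLc] := Hgflip (`|x t| + 1).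
  have rx := hd_rdq Hx tt; have rl := hd_rdq Hl tt.
  exists (`|Lc| * (`|xd t| + 1) + kA * (`|ld t| + 1) + kA * (`|xd t| + 1)).
  have cx := rdq_cont rx.
  move/cvgrPdist_le: cx => /(_ 1 ltr01) cx.
  have bx := dq_bound rx; have bl := dq_bound rl.
  near=> s.
  have ts : t < s by near: s; exact: nbhs_right_gt.
  have t0s : t0 <= s by rewrite (le_trans tt)// ltW.
  have hx1 : `|x t - x s| <= 1 by near: s; exact: cx.
  have hbx : `|x s - x t| <= (`|xd t| + 1) * (s - t) by near: s; exact: bx.
  have hbl : `|l s - l t| <= (`|ld t| + 1) * (s - t) by near: s; exact: bl.
  have nxs : `|x s| <= `|x t| + 1.
    have := ler_normB (x t) (x t - x s); rewrite opprB addrC subrK; lra.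
  have nxt : `|x t| <= `|x t| + 1 by lra.
  have hG := HLc _ _ nxs nxt.
  have hAs := HAsl (l s) (l t).
  have hA := HkA (x s - x t).
  have hLc : Lc * `|x s - x t| <= `|Lc| * `|x s - x t|.
    by apply: ler_wpM2r => //; rewrite real_ler_norm // num_real.
  have p1 : `|Lc| * `|x s - x t| <= `|Lc| * ((`|xd t| + 1) * (s - t)) by apply: ler_wpM2l.
  have p2 : kA * `|l s - l t| <= kA * ((`|ld t| + 1) * (s - t)) by apply: ler_wpM2l.
  have p3 : kA * `|x s - x t| <= kA * ((`|xd t| + 1) * (s - t)) by apply: ler_wpM2l.
  rewrite prod_normE /= vx // vx // vl // vl // zl3 zl4 -linearB normrN.
  rewrite ge_max; apply/andP; split.
    rewrite (le_trans (ler_normD _ _))//.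
    have := normr_ge0 (A (x s - x t)).
    nra.
  have := normr_ge0 (gf (x s) - gf (x t)); have := normr_ge0 (As (l s) - As (l t)).
  nra.
pose tp1 := tp + 1.
have Htp1 : t0 < tp1 by rewrite /tp1; lra.
pose a t := expR (2 * rho t).
have Ha : forall t, tp1 <= t -> is_derive t (1:R) a (2 * eps t * a t).
  move=> t tt.
  have t0t : t0 < t by apply: lt_le_trans tt.
  have ce : {for t, continuous eps} := wc_cont t0t (hd_wc Heps_d1 (ltW t0t)).
  have ceu : {within `[t0, t + 1], continuous eps}.
    apply/subspace_continuousP => y; rewrite /= in_itv /= => /andP[ty _].
    have := hd_wc Heps_d1 ty; apply: cvg_trans; apply: cvg_app.
    by apply: within_subset => s /=; rewrite in_itv /= => /andP[].
  have sc : compact `[t0, t + 1]%classic by exact: segment_compact.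
  have int := continuous_compact_integrable sc ceu.
  have tt1 : t < t + 1 by rewrite ltrDl.
  have [D1 D2] := continuous_FTC1_closed tt1 int t0t ce.
  have Hr : is_derive t (1:R) rho (eps t).
    by rewrite -D2 derive1E; apply: derivableP.
  have H2 : is_derive t (1:R) (fun s => 2 * rho s) (2 * eps t) by have := is_deriveZ 2 Hr.
  have := @is_derive1_comp _ expR (fun s => 2 * rho s) t _ _ (is_derive_expR _) H2.
  by rewrite mulrC.
have Ha0 : forall t, 0 <= a t by move=> t; exact: expR_ge0.
have Hc2 : forall t, tp1 <= t -> 2 * eps t * eps1 t + eps2 t <= 0.
  by move=> t tt; apply: Hcond2; rewrite (le_trans _ tt)// /tp1 lerDl.
have HW := W_noninc ip2C ip2D ip2K ip2ge0 Htp1 Hz Hzd Heps_d1 Heps_d2 Ha Ha0 Hmono Hlip Hc2.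
have Hgap : forall t, t0 <= t ->
    ip2 (zd t + eps t *: z t) (z t - zb) <= - (f (x t) + ipY lb (A (x t) - b) - f xb).
  move=> t tt; rewrite /ip2 /= vx // vl //.
  have g1 := grad_ineq Hfconv Hfdiff (x t) xb.
  have a1 : ipX (As (l t)) (x t - xb) = ipY (A (x t) - b) (l t).
    by rewrite iC -HAs linearB /= Axb.
  rewrite -[xb - x t]opprB (ipNr iC iD) in g1.
  rewrite (ipNl iD) (ipDl1 iD) a1 (ipBr jC jD) (jC _ lb).
  lra.
have Hgap0 : forall t, t0 <= t -> 0 <= f (x t) + ipY lb (A (x t) - b) - f xb.
  move=> t tt; have := saddle_gap HipX HipY Hfconv Hfdiff HAs (x t) Hxb Hlb; lra.
have Hmono0 : forall t, t0 <= t -> ip2 (zd t + eps t *: z t) (z t - zb) <= 0.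
  by move=> t tt; have := Hgap t tt; have := Hgap0 t tt; lra.
have HB := traj_bounded ip2C ip2D ip2K ip2ge0 Hz Heps_pos Hmono0.
pose Wp := a tp1 * (ip2 (zd tp1) (zd tp1) + eps1 tp1 * ip2 (z tp1) (z tp1)).
pose cB := Num.max (ip2 (z t0 - zb) (z t0 - zb)) (ip2 zb zb).
pose M := `|Wp| + `|cB| + ip2 zb zb + 1.
have M0 : 0 <= M by have := ip2ge0 zb; have := normr_ge0 Wp; have := normr_ge0 cB; rewrite /M; lra.
have Hfin : forall t, tp1 <= t ->
  [/\ ip2 (zd t) (zd t) <= `|Wp| * expR (- (2 * rho t)) + eps t ^+ 2 * (2 * cB + 2 * ip2 zb zb),
      ip2 (z t - zb) (z t - zb) <= cB &
      ip2 (z t) (z t) <= 2 * cB + 2 * ip2 zb zb].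
  move=> t tt.
  have t0t : t0 <= t by rewrite ltW // (lt_le_trans Htp1 tt).
  have hB : ip2 (z t - zb) (z t - zb) <= cB := HB t t0t.
  have hZ : ip2 (z t) (z t) <= 2 * cB + 2 * ip2 zb zb.
    have := ip_sum_le ip2C ip2D ip2ge0 (z t - zb) zb; rewrite subrK -/cB; lra.
  split => //.
  have hW := HW t tt.
  have at0 : 0 < a t by exact: expR_gt0.
  have h1 : ip2 (zd t) (zd t) + eps1 t * ip2 (z t) (z t) <= Wp * expR (- (2 * rho t)).
    rewrite expRN -/(a t) -[leLHS](mulKf (lt0r_neq0 at0)) mulrC.
    by apply: ler_wpM2r; [rewrite invr_ge0 ltW | exact: hW].
  have E0 : 0 <= expR (- (2 * rho t)) by exact: expR_ge0.
  have h2 : Wp * expR (- (2 * rho t)) <= `|Wp| * expR (- (2 * rho t)).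
    by apply: ler_wpM2r => //; rewrite real_ler_norm // num_real.
  have h3 : - eps1 t <= eps t ^+ 2.
    have := Hcond1 t; rewrite (le_trans _ tt) /tp1 ?lerDl // => /(_ isT); lra.
  have Z0 := ip2ge0 (z t).
  have h4 : - eps1 t * ip2 (z t) (z t) <= eps t ^+ 2 * ip2 (z t) (z t) by apply: ler_wpM2r.
  have h5 : eps t ^+ 2 * ip2 (z t) (z t) <= eps t ^+ 2 * (2 * cB + 2 * ip2 zb zb).
    by apply: ler_wpM2l => //; rewrite sqr_ge0.
  lra.
have cBM : cB <= M.
  have := real_ler_norm (num_real cB); have := ip2ge0 zb; have := normr_ge0 Wp; rewrite /M; lra.
have zzM : ip2 zb zb <= M.
  have := normr_ge0 cB; have := normr_ge0 Wp; rewrite /M; lra.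
have WM : `|Wp| <= M.
  have := normr_ge0 cB; have := ip2ge0 zb; rewrite /M; lra.
have gpos : forall t, 0 <= g t by move=> t; rewrite /g addr_ge0 // ?expR_ge0 // sqr_ge0.
have Hpinf : \forall t \near +oo, tp1 <= t by apply: nbhs_pinfty_ge; rewrite num_real.
have coef : forall t, tp1 <= t ->
   `|Wp| * expR (- (2 * rho t)) <= M * expR (- (2 * rho t)) /\
   eps t ^+ 2 * (2 * cB + 2 * ip2 zb zb) <= eps t ^+ 2 * (4 * M) /\
   eps t ^+ 2 * cB <= eps t ^+ 2 * M.
  move=> t tt; have e0 : 0 <= eps t ^+ 2 by rewrite sqr_ge0.
  split; first by apply: ler_wpM2r => //; exact: expR_ge0.
  split; apply: ler_wpM2l => //; lra.
split.
- exists (10 * M); near=> t.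
  have tt : tp1 <= t by near: t; exact: Hpinf.
  have t0t : t0 <= t by rewrite ltW // (lt_le_trans Htp1 tt).
  have [h1 h2 h3] := Hfin t tt.
  have [c1 [c2 c3]] := coef t tt.
  have ME0 := mulr_ge0 M0 (expR_ge0 (- (2 * rho t))).
  have Me0 : 0 <= M * eps t ^+ 2 by rewrite mulr_ge0 // sqr_ge0.
  have -> : pnorm2 (xd t + eps t *: (x t - xb)) (ld t + eps t *: (l t - lb)) =
     ip2 (zd t + eps t *: (z t - zb)) (zd t + eps t *: (z t - zb)).
    by rewrite /pnorm2 /ip2 /= iN jN.
  rewrite ger0_norm ?ip2ge0 // ger0_norm ?gpos // /g.
  have := ip_sum_le ip2C ip2D ip2ge0 (zd t) (eps t *: (z t - zb)).
  rewrite (ipZl ip2D) (ipZr ip2C ip2D) [eps t * (eps t * _)]mulrA -expr2.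
  have : eps t ^+ 2 * ip2 (z t - zb) (z t - zb) <= eps t ^+ 2 * cB.
    by apply: ler_wpM2l => //; rewrite sqr_ge0.
  lra.
- exists (10 * M); near=> t.
  have tt : tp1 <= t by near: t; exact: Hpinf.
  have t0t : t0 <= t by rewrite ltW // (lt_le_trans Htp1 tt).
  have [h1 h2 h3] := Hfin t tt.
  have [c1 [c2 c3]] := coef t tt.
  have ME0 := mulr_ge0 M0 (expR_ge0 (- (2 * rho t))).
  have Me0 : 0 <= M * eps t ^+ 2 by rewrite mulr_ge0 // sqr_ge0.
  have ep := Heps_pos t t0t.
  rewrite /lagr Axb subrr (ip0r jC jD) addr0.
  have G0 := Hgap0 t t0t.
  have hg := Hgap t t0t.
  rewrite (ger0_norm (mulr_ge0 (ltW ep) G0)) ger0_norm ?gpos // /g.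
  have k1 : eps t * (f (x t) + ipY lb (A (x t) - b) - f xb) <=
            eps t * (- ip2 (zd t + eps t *: z t) (z t - zb)).
    by apply: ler_wpM2l; [exact: ltW | lra].
  have k2 := ip2ge0 ((zd t + eps t *: z t) + eps t *: (z t - zb)).
  rewrite (ip_expand ip2C ip2D) in k2.
  have k3 := ip_sum_le ip2C ip2D ip2ge0 (zd t) (eps t *: z t).
  rewrite (ipZl ip2D) (ipZr ip2C ip2D) [eps t * (eps t * _)]mulrA -expr2 in k3.
  have k4 : eps t ^+ 2 * ip2 (z t) (z t) <= eps t ^+ 2 * (2 * cB + 2 * ip2 zb zb).
    by apply: ler_wpM2l => //; rewrite sqr_ge0.
  have k5 : eps t ^+ 2 * ip2 (z t - zb) (z t - zb) <= eps t ^+ 2 * cB.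
    by apply: ler_wpM2l => //; rewrite sqr_ge0.
  lra.
- exists (20 * M); near=> t.
  have tt : tp1 <= t by near: t; exact: Hpinf.
  have t0t : t0 <= t by rewrite ltW // (lt_le_trans Htp1 tt).
  have [h1 h2 h3] := Hfin t tt.
  have [c1 [c2 c3]] := coef t tt.
  have ME0 := mulr_ge0 M0 (expR_ge0 (- (2 * rho t))).
  have Me0 : 0 <= M * eps t ^+ 2 by rewrite mulr_ge0 // sqr_ge0.
  rewrite /Top /= gz Axb subrr !subr0.
  have e1 : gf (x t) + As (l t) = - (xd t + eps t *: x t) by rewrite vx // opprK.
  have e2 : b - A (x t) = - (ld t + eps t *: l t) by rewrite vl // opprB.
  have -> : pnorm2 (gf (x t) + As (l t)) (b - A (x t)) =
     ip2 (zd t + eps t *: z t) (zd t + eps t *: z t).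
    by rewrite /pnorm2 e1 e2 !normrN /ip2 /= iN jN.
  rewrite ger0_norm ?ip2ge0 // ger0_norm ?gpos // /g.
  have k3 := ip_sum_le ip2C ip2D ip2ge0 (zd t) (eps t *: z t).
  rewrite (ipZl ip2D) (ipZr ip2C ip2D) [eps t * (eps t * _)]mulrA -expr2 in k3.
  have k4 : eps t ^+ 2 * ip2 (z t) (z t) <= eps t ^+ 2 * (2 * cB + 2 * ip2 zb zb).
    by apply: ler_wpM2l => //; rewrite sqr_ge0.
  lra.
Unshelve. all: by end_near.
Qed.
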